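(* Let $L$ be a finite-dimensional pure, nonnilpotent, solvable Lie algebra over $\mathbb{C}$ of breadth $2$ such that $\dim[L,L]=3$ and $\dim\big(L/Z(L)\big)=3$. Then $L$ has a basis $\{x_1,x_2,x_3,z\}$ in which the only nonzero brackets of basis elements (up to antisymmetry) are $[x_1,x_2]=x_2$, $[x_1,x_3]=-x_3$ and $[x_2,x_3]=z$.
   Context: For $x\in L$, the breadth of $x$ is $b(x)=\mathrm{rank}(\mathrm{ad}_x)$, and the breadth of $L$ is $b(L)=\max\{b(x)\mid x\in L\}$. A Lie algebra $L$ is pure (or stem) if it has no abelian ideal as a direct summand; equivalently $Z(L)\subseteq[L,L]$. $Z(L)$ denotes the center of $L$. *)

(* Defs.v *)
From HB Require Import structures.
From mathcomp Require Import all_boot all_order all_algebra.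
From mathcomp Require Import reals complex.
Set Implicit Arguments. Unset Strict Implicit. Unset Printing Implicit Defensive.
Import Order.TTheory GRing.Theory Num.Theory.
Local Open Scope ring_scope.


Section Lie.
Variables (F : fieldType) (L : vectType F) (br : L -> L -> L).

Definition is_lie_bracket : Prop :=
  [/\ (forall (a : F) (x y z : L), br (a *: x + y) z = a *: br x z + br y z),
      (forall (a : F) (x y z : L), br x (a *: y + z) = a *: br x y + br x z),
      (forall x : L, br x x = 0) &
      (forall x y z : L, br x (br y z) + br y (br z x) + br z (br x y) = 0)].

Definition lie_ad (x : L) : 'End(L) := linfun (br x).

(* [U, V] : the subspace spanned by all brackets [u, v], u in U, v in V
   (spanned by brackets of basis vectors, by bilinearity). *)
Definition lie_brs (U V : {vspace L}) : {vspace L} :=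
  (\sum_(u <- vbasis U) \sum_(v <- vbasis V) <[br u v]>)%VS.

Definition lie_derived : {vspace L} := lie_brs fullv fullv.

Definition lie_center : {vspace L} := lker (linfun lie_ad).

Fixpoint lie_derived_series (k : nat) : {vspace L} :=
  if k is k'.+1 then lie_brs (lie_derived_series k') (lie_derived_series k')
  else fullv.

Fixpoint lie_lower_central (k : nat) : {vspace L} :=
  if k is k'.+1 then lie_brs fullv (lie_lower_central k') else fullv.

Definition lie_solvable : Prop := exists k, lie_derived_series k = 0%VS :> {vspace L}.
Definition lie_nilpotent : Prop := exists k, lie_lower_central k = 0%VS :> {vspace L}.

Definition lie_pure : Prop := (lie_center <= lie_derived)%VS.

Definition lie_breadth_elt (x : L) : nat := \dim (limg (lie_ad x)).

Definition lie_breadth_eq (n : nat) : Prop :=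
  (forall x : L, (lie_breadth_elt x <= n)%N) /\ exists x : L, lie_breadth_elt x = n.

End Lie.

(* Main.v *)
Require Import Defs.
From HB Require Import structures.
From mathcomp Require Import all_boot all_order all_algebra.
From mathcomp Require Import reals complex.
From mathcomp Require Import ring.
Import Order.TTheory GRing.Theory Num.Theory.
Local Open Scope ring_scope.

Set Implicit Arguments. Unset Strict Implicit. Unset Printing Implicit Defensive.

Lemma linfunE_gen (K : fieldType) (aT rT : vectType K) (f : aT -> rT) :
  linear f -> linfun f =1 f.
Proof.
move=> lf v.
pose g : {linear aT -> rT} := HB.pack f (GRing.isLinear.Build _ _ _ _ f lf).
exact: (lfunE g v).
Qed.

Section Lie.
Variables (F : fieldType) (L : vectType F) (br : L -> L -> L).
Hypothesis Hbr : is_lie_bracket br.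

Lemma br0l v : br 0 v = 0.
Proof. case: Hbr => H1 _ _ _. by have := H1 1 0 0 v; rewrite !scale1r addr0 => /(congr1 (fun t => t - br 0 v)); rewrite subrr addrK => /esym. Qed.
Lemma br0r v : br v 0 = 0.
Proof. case: Hbr => _ H1 _ _. by have := H1 1 v 0 0; rewrite !scale1r addr0 => /(congr1 (fun t => t - br v 0)); rewrite subrr addrK => /esym.  Qed.
Lemma brDl x y z : br (x + y) z = br x z + br y z.
Proof. case: Hbr => H1 _ _ _. by rewrite -[x]scale1r H1 !scale1r. Qed.
Lemma brDr x y z : br z (x + y) = br z x + br z y.
Proof. case: Hbr => _ H1 _ _. by rewrite -[x]scale1r H1 !scale1r. Qed.
Lemma brZl a x z : br (a *: x) z = a *: br x z.
Proof. case: Hbr => H1 _ _ _. by rewrite -[a *: x]addr0 H1 br0l addr0. Qed.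
Lemma brZr a x z : br z (a *: x) = a *: br z x.
Proof. case: Hbr => _ H1 _ _. by rewrite -[a *: x]addr0 H1 br0r addr0. Qed.
Lemma brNl x z : br (- x) z = - br x z.
Proof. by rewrite -scaleN1r brZl scaleN1r. Qed.
Lemma brNr x z : br z (- x) = - br z x.
Proof. by rewrite -scaleN1r brZr scaleN1r. Qed.
Lemma brBl x y z : br (x - y) z = br x z - br y z.
Proof. by rewrite brDl brNl. Qed.
Lemma brBr x y z : br z (x - y) = br z x - br z y.
Proof. by rewrite brDr brNr. Qed.
Lemma brxx x : br x x = 0.
Proof. by case: Hbr. Qed.
Lemma brC x y : br x y = - br y x.
Proof.
have := brxx (x + y); rewrite brDl !brDr !brxx add0r addr0 => /eqP.
by rewrite addr_eq0 => /eqP.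
Qed.
Lemma jacobi x y z : br x (br y z) + br y (br z x) + br z (br x y) = 0.
Proof. by case: Hbr. Qed.
Lemma brder x y z : br x (br y z) = br (br x y) z + br y (br x z).
Proof.
have := jacobi x y z; rewrite (brC z x) brNr (brC z (br x y)) => h.
by apply/eqP; rewrite -subr_eq0 -h opprD addrA addrAC.
Qed.

Lemma br_suml I (r : seq I) (P : pred I) (G : I -> L) v :
  br (\sum_(i <- r | P i) G i) v = \sum_(i <- r | P i) br (G i) v.
Proof.
apply: (big_rec2 (fun a b => br b v = a)); first by rewrite br0l.
by move=> i y1 y2 _ <-; rewrite brDl.
Qed.
Lemma br_sumr I (r : seq I) (P : pred I) (G : I -> L) v :
  br v (\sum_(i <- r | P i) G i) = \sum_(i <- r | P i) br v (G i).
Proof.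
apply: (big_rec2 (fun a b => br v b = a)); first by rewrite br0r.
by move=> i y1 y2 _ <-; rewrite brDr.
Qed.

Lemma lin_brr x : linear (br x).
Proof. by move=> a u v; rewrite brDr brZr. Qed.
Lemma lie_adE x v : lie_ad br x v = br x v.
Proof. by rewrite /lie_ad linfunE_gen //; apply: lin_brr. Qed.

Lemma lin_ad : linear (lie_ad br).
Proof.
move=> a u v; apply/lfunP => w.
by rewrite lie_adE add_lfunE scale_lfunE !lie_adE brDl brZl.
Qed.

Lemma memZP u : reflect (forall v, br u v = 0) (u \in lie_center br).
Proof.
rewrite /lie_center memv_ker linfunE_gen; last exact: lin_ad.
apply: (iffP eqP) => [H v | H].
  by rewrite -lie_adE H zero_lfunE.
by apply/lfunP => v; rewrite lie_adE H zero_lfunE.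
Qed.

Lemma brs_mem (U V : {vspace L}) u v : u \in U -> v \in V -> br u v \in lie_brs br U V.
Proof.
move=> Hu Hv; rewrite (coord_vbasis Hu) (coord_vbasis Hv) br_suml.
apply: rpred_sum => i _; rewrite brZl br_sumr; apply: rpredZ.
apply: rpred_sum => j _; rewrite brZr; apply: rpredZ.
have mi : (vbasis U)`_i \in (vbasis U : seq L) by rewrite mem_nth // size_tuple.
have mj : (vbasis V)`_j \in (vbasis V : seq L) by rewrite mem_nth // size_tuple.
rewrite /lie_brs (big_rem _ mi) /=; apply: (subv_trans _ (addvSl _ _)).
rewrite (big_rem _ mj) /=; apply: (subv_trans _ (addvSl _ _)).
exact: memv_line.
Qed.

Lemma brs_sub (U V W : {vspace L}) : (forall u v, u \in U -> v \in V -> br u v \in W) ->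
  (lie_brs br U V <= W)%VS.
Proof.
move=> H; rewrite /lie_brs big_seq.
elim/big_ind: _ => [|X Y HX HY|u Hu]; [exact: sub0v|by rewrite subv_add HX HY|].
rewrite big_seq; elim/big_ind: _ => [|X Y HX HY|v Hv]; [exact: sub0v|by rewrite subv_add HX HY|].
by rewrite -memvE; apply: H; apply: vbasis_mem.
Qed.

End Lie.


Section Lie2.
Variables (F : fieldType) (L : vectType F) (br : L -> L -> L).
Hypothesis Hbr : is_lie_bracket br.
Local Notation Z := (lie_center br).
Local Notation D := (lie_derived br).

Lemma brZr0 z v : z \in Z -> br v z = 0.
Proof. by move/(memZP Hbr) => H; rewrite (brC Hbr) H oppr0. Qed.
Lemma brZl0 z v : z \in Z -> br z v = 0.
Proof. by move/(memZP Hbr) => H; rewrite H. Qed.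

Lemma memD u v : br u v \in D.
Proof. by apply: (brs_mem Hbr); apply: memvf. Qed.

Lemma span_br (s t : seq L) (W : {vspace L}) u v :
  (forall x y, x \in s -> y \in t -> br x y \in W) ->
  u \in <<s>>%VS -> v \in <<t>>%VS -> br u v \in W.
Proof.
move=> H Hu Hv.
rewrite (coord_span (X := in_tuple s) Hu) (coord_span (X := in_tuple t) Hv).
rewrite (br_suml Hbr); apply: rpred_sum => i _; rewrite (brZl Hbr); apply: rpredZ.
rewrite (br_sumr Hbr); apply: rpred_sum => j _; rewrite (brZr Hbr); apply: rpredZ.
by apply: H; apply: mem_nth; apply: ltn_ord.
Qed.

Lemma span_brZ (s t : seq L) (W : {vspace L}) u v :
  (forall x y, x \in s -> y \in t -> br x y \in W) ->
  u \in (<<s>> + Z)%VS -> v \in (<<t>> + Z)%VS -> br u v \in W.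
Proof.
move=> H /memv_addP[u1 Hu1 [z1 Hz1 ->]] /memv_addP[v1 Hv1 [z2 Hz2 ->]].
rewrite (brDl Hbr) (brZl0 _ Hz1) addr0 (brDr Hbr) (brZr0 _ Hz2) addr0.
exact: span_br Hu1 Hv1.
Qed.

Lemma dim1P (U : {vspace L}) : \dim U = 1%N -> exists a, U = <<[:: a]>>%VS.
Proof.
move=> h; have := vbasisP U; rewrite /basis_of => /andP[/eqP e _].
have : size (vbasis U) = 1%N by rewrite size_tuple.
move: e; case: (tval (vbasis U)) => [|a [|b s]] //= e _.
by exists a.
Qed.

Lemma dim2P (U : {vspace L}) : \dim U = 2%N -> exists a b, U = <<[:: a; b]>>%VS.
Proof.
move=> h; have := vbasisP U; rewrite /basis_of => /andP[/eqP e _].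
have : size (vbasis U) = 2%N by rewrite size_tuple.
move: e; case: (tval (vbasis U)) => [|a [|b [|c s]]] //= e _.
by exists a, b.
Qed.

Lemma coord_inj n (X : n.-tuple L) u v : u \in <<X>>%VS -> v \in <<X>>%VS ->
  (forall j, coord X j u = coord X j v) -> u = v.
Proof.
move=> Hu Hv H; rewrite (coord_span Hu) (coord_span Hv).
by apply: eq_bigr => i _; rewrite H.
Qed.

End Lie2.


Section Coord3.
Variables (F : fieldType) (L : vectType F).
Variables (x y z : L).
Hypothesis fr : free [:: x; y; z].
Let X := [tuple x; y; z].
Lemma c3x j : coord X j x = (j == 0 :> nat)%:R.
Proof. by have := coord_free (X := X) ord0 j fr; rewrite /= => ->; case: j => [[|[|[|]]]]. Qed.
Lemma c3y j : coord X j y = (j == 1 :> nat)%:R.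
Proof. by have := coord_free (X := X) (Ordinal (isT : (1 < 3)%N)) j fr; rewrite /= => ->; case: j => [[|[|[|]]]]. Qed.
Lemma c3z j : coord X j z = (j == 2 :> nat)%:R.
Proof. by have := coord_free (X := X) (Ordinal (isT : (2 < 3)%N)) j fr; rewrite /= => ->; case: j => [[|[|[|]]]]. Qed.
Lemma span3 u : u \in <<X>>%VS ->
  u = coord X ord0 u *: x + coord X (Ordinal (isT : (1 < 3)%N)) u *: y
      + coord X (Ordinal (isT : (2 < 3)%N)) u *: z.
Proof.
move=> Hu; rewrite {1}(coord_span Hu) !big_ord_recl big_ord0 addr0 addrA.
have e1 : lift ord0 ord0 = (Ordinal (isT : (1<3)%N)) :> 'I_3 by apply: val_inj.
have e2 : lift ord0 (lift ord0 ord0) = (Ordinal (isT : (2<3)%N)) :> 'I_3 by apply: val_inj.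
by rewrite e1 e2.
Qed.
End Coord3.

Definition o0 : 'I_3 := ord0.
Definition o1 : 'I_3 := Ordinal (isT : (1 < 3)%N).
Definition o2 : 'I_3 := Ordinal (isT : (2 < 3)%N).

Section Final.
Variables (F : fieldType) (L : vectType F) (br : L -> L -> L).
Hypothesis Hbr : is_lie_bracket br.
Local Notation Z := (lie_center br).
Local Notation D := (lie_derived br).

Lemma in_span2 (a b u : L) : u \in <<[:: a; b]>>%VS -> exists p q, u = p *: a + q *: b.
Proof.
rewrite span_cons span_seq1 => /memv_addP[u1 /vlineP[p ->] [u2 /vlineP[q ->] ->]].
by exists p, q.
Qed.

Lemma final x1 x2 x3 :
  (Z <= D)%VS -> \dim D = 3%N -> (\dim (fullv : {vspace L}) - \dim Z)%N = 3%N ->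
  br x1 x2 = x2 -> br x1 x3 = - x3 -> br x2 x3 \in Z -> br x2 x3 != 0 ->
  exists x1 x2 x3 z : L,
    [/\ basis_of fullv [:: x1; x2; x3; z],
        br x1 x2 = x2, br x1 x3 = - x3, br x2 x3 = z &
        [/\ br x1 z = 0, br x2 z = 0 & br x3 z = 0]].
Proof.
move=> ZD dD dQ h2 h3 zZ zn0; set z := br x2 x3 in zZ zn0.
have x3n0 : x3 != 0 by apply/eqP => e; move: zn0; rewrite /z e (br0r Hbr) eqxx.
have fr : free [:: x2; x3; z].
  rewrite free_cons; apply/andP; split.
    apply/negP => /in_span2[p [q e]].
    have e2 : x2 = (- p) *: x3.
      by rewrite -{1}h2 e (brDr Hbr) !(brZr Hbr) h3 (brZr0 Hbr _ zZ) scaler0 addr0 scalerN scaleNr.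
    by move: zn0; rewrite /z e2 (brZl Hbr) (brxx Hbr) scaler0 eqxx.
  rewrite free_cons seq1_free zn0 andbT span_seq1; apply/negP => /vlineP[c e].
  have : - x3 = 0 by rewrite -h3 e (brZr Hbr) (brZr0 Hbr _ zZ) scaler0.
  by move/eqP; rewrite oppr_eq0 (negbTE x3n0).
set X := [tuple x2; x3; z].
have inD : forall u v, br u v \in D by move=> u v; apply: memD.
have XD : (<<X>> <= D)%VS.
  apply/span_subvP => u; rewrite !inE => /or3P[] /eqP ->.
  - by rewrite -h2 inD.
  - by rewrite -[x3]opprK -h3 rpredN inD.
  - exact: inD.
have dX : \dim <<X>> = 3%N by apply/eqP; exact: fr.
have DX : D = <<X>>%VS.
  by apply/eqP; rewrite eq_sym eqEdim XD dX dD leqnn.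
have key : forall u, u \in <<X>>%VS -> br x1 u = 0 ->
    u = coord X o2 u *: z.
  move=> u Hu h0; move: (Hu) => /span3 e.
  set c0 := coord _ ord0 u in e; set c1 := coord _ (Ordinal _) u in e.
  set c2 := coord _ (Ordinal _) u in e.
  have h : br x1 (c0 *: x2 + c1 *: x3 + c2 *: z) = 0 by rewrite -e.
  move: h; rewrite !(brDr Hbr) !(brZr Hbr) h2 h3 (brZr0 Hbr _ zZ) scaler0 addr0 => h.
  have := congr1 (coord X o0) h; rewrite linear0 linearD !linearZ /= linearN /= (c3x fr) (c3y fr) /=.
  rewrite oppr0 mulr1 mulr0 addr0 => ec0.
  have := congr1 (coord X o1) h; rewrite linear0 linearD !linearZ /= linearN /= (c3x fr) (c3y fr) /=.
  rewrite mulr0 add0r => /eqP; rewrite mulrN oppr_eq0 mulr1 => /eqP ec1.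
  by rewrite {1}e ec0 ec1 !scale0r !add0r.
have Zz : Z = <[z]>%VS.
  apply/eqP; rewrite eqEsubv -memvE zZ andbT; apply/subvP => u uZ.
  have uX : u \in <<X>>%VS by rewrite -DX; apply: (subvP ZD).
  rewrite (key u uX) ?memvZ ?memv_line //.
  by rewrite (brZr0 Hbr _ uZ).
have x1X : x1 \notin <<X>>%VS.
  apply/negP => x1X.
  have e := key x1 x1X (brxx Hbr x1).
  have : x2 = 0 by rewrite -h2 e (brZl Hbr) (brZl0 Hbr _ zZ) scaler0.
  by move=> x20; move: zn0; rewrite /z x20 (br0l Hbr) eqxx.
have fr4 : free [:: x1; x2; x3; z] by rewrite free_cons x1X fr.
exists x1, x2, x3, z; split => //.
- rewrite /basis_of fr4 andbT eqEdim subvf /=.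
  have -> : \dim <<[:: x1; x2; x3; z]>> = 4%N by apply/eqP; exact: fr4.
  have dZ : \dim Z = 1%N by rewrite Zz dim_vline zn0.
  move: dQ; rewrite dZ => dQ.
  have : (\dim (fullv : {vspace L}) >= \dim Z)%N by apply: dimvS; apply: subvf.
  by rewrite dZ; move: dQ; case: (\dim fullv) => [|[|[|[|[|]]]]].
- split; by rewrite ?(brZr0 Hbr _ zZ).
Qed.
End Final.


Lemma eq_by (F : comRingType) (a b c d k : F) : a - b = k * (c - d) -> c = d -> a = b.
Proof. by move=> h e; apply/eqP; rewrite -subr_eq0 h e subrr mulr0. Qed.

Lemma eig (F : fieldType) (sq : forall a : F, exists b, b * b = a) (two : (2%:R : F) != 0)
  (p2 t q3 : F) : t * t - p2 * q3 != 0 ->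
  exists mu c2 c3 d2 d3 : F,
    [/\ mu != 0, c2 * t - c3 * p2 = mu * c2, c2 * q3 - c3 * t = mu * c3,
        d2 * t - d3 * p2 = - mu * d2 /\ d2 * q3 - d3 * t = - mu * d3
      & c2 * d3 - c3 * d2 != 0].
Proof.
move=> dn0; have [p20|p2n0] := eqVneq p2 0.
  have tn0 : t != 0 by apply: contraNneq dn0 => ->; rewrite p20 !mul0r subr0.
  exists t, (2%:R * t), q3, 0, 1; split => //.
  - by rewrite p20; ring.
  - by ring.
  - by split; rewrite ?p20; ring.
  - have -> : 2%:R * t * 1 - q3 * 0 = 2%:R * t by ring.
    by rewrite mulf_neq0.
have [mu hmu] := sq (t * t - p2 * q3).
have mun0 : mu != 0 by apply: contraNneq dn0 => e; rewrite -hmu e mul0r.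
exists mu, p2, (t - mu), p2, (t + mu); split => //.
- by ring.
- by apply: (eq_by (k := 1) _ hmu); ring.
- split; first by ring.
  by apply: (eq_by (k := 1) _ hmu); ring.
- have -> : p2 * (t + mu) - (t - mu) * p2 = 2%:R * mu * p2 by ring.
  by rewrite !mulf_neq0.
Qed.


Section Case1.
Variables (F : fieldType) (L : vectType F) (br : L -> L -> L).
Hypothesis Hbr : is_lie_bracket br.
Local Notation Z := (lie_center br).
Local Notation D := (lie_derived br).

Lemma dec2 (a b u : L) : u \in (<<[:: a; b]>> + Z)%VS ->
  exists p q z, z \in Z /\ u = p *: a + q *: b + z.
Proof.
case/memv_addP => u1 /in_span2 [p [q ->]] [z zZ ->].
by exists p, q, z.
Qed.

Lemma dec1 (a u : L) : u \in (<<[:: a]>> + Z)%VS ->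
  exists m z, z \in Z /\ u = m *: a + z.
Proof.
case/memv_addP => u1; rewrite span_seq1 => /vlineP[m ->] [z zZ ->].
by exists m, z.
Qed.

Lemma spanB (a1 a2 a3 : L) : (fullv = <<[:: a1; a2; a3]>> + Z)%VS ->
  forall u v, br u v \in <<[:: br a2 a3; br a3 a1; br a1 a2]>>%VS.
Proof.
move=> hL u v.
apply: (span_brZ Hbr (s := [:: a1; a2; a3]) (t := [:: a1; a2; a3])); last first.
- by rewrite -hL memvf.
- by rewrite -hL memvf.
move=> x y; rewrite !inE => /or3P[]/eqP-> /or3P[]/eqP->;
  try by rewrite (brxx Hbr) mem0v.
all: try by apply: memv_span; rewrite !inE eqxx ?orbT.
all: by rewrite (brC Hbr) memvN; apply: memv_span; rewrite !inE eqxx ?orbT.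
Qed.

Lemma freeB (a1 a2 a3 : L) : (fullv = <<[:: a1; a2; a3]>> + Z)%VS -> \dim D = 3%N ->
  free [:: br a2 a3; br a3 a1; br a1 a2] /\ D = <<[:: br a2 a3; br a3 a1; br a1 a2]>>%VS.
Proof.
move=> hL dD.
have DB : (D <= <<[:: br a2 a3; br a3 a1; br a1 a2]>>)%VS.
  by rewrite /lie_derived; apply: brs_sub => u v _ _; apply: spanB.
have d1 := dim_span [:: br a2 a3; br a3 a1; br a1 a2].
have d2 := dimvS DB.
have e3 : \dim <<[:: br a2 a3; br a3 a1; br a1 a2]>> = 3%N.
  by apply/eqP; rewrite eqn_leq d1 -dD d2.
split; first by rewrite /free e3.
by apply/eqP; rewrite eqEdim DB e3 dD.
Qed.

End Case1.


Ltac crd fr := rewrite ?linear0 ?linearD ?linearZ /= ?linearN /= ?linear0 ?(c3x fr, c3y fr, c3z fr) /=.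

Ltac solve_by H := first [ring | apply: (eq_by (k:=1) _ H); ring | apply: (eq_by (k:= -1) _ H); ring].

Section Case1b.
Variables (F : fieldType) (L : vectType F) (br : L -> L -> L).
Hypothesis Hbr : is_lie_bracket br.
Local Notation Z := (lie_center br).
Local Notation D := (lie_derived br).

Lemma case1 (sq : forall a : F, exists b, b * b = a) (two : (2%:R : F) != 0)
  (a1 a2 a3 : L) :
  (fullv = <<[:: a1; a2; a3]>> + Z)%VS -> (D = <<[:: a2; a3]>> + Z)%VS ->
  (Z <= D)%VS -> \dim D = 3%N -> (\dim (fullv : {vspace L}) - \dim Z)%N = 3%N ->
  exists x1 x2 x3 z : L,
    [/\ basis_of fullv [:: x1; x2; x3; z],
        br x1 x2 = x2, br x1 x3 = - x3, br x2 x3 = z &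
        [/\ br x1 z = 0, br x2 z = 0 & br x3 z = 0]].
Proof.
move=> hL hD ZD dD dQ.
have [fr DB] := freeB Hbr hL dD.
have inD : forall u v, br u v \in D by move=> u v; apply: memD.
have mD : forall u v, br u v \in (<<[:: a2; a3]>> + Z)%VS by move=> u v; rewrite -hD inD.
have [p1 [q1 [z1 [z1Z e23]]]] := dec2 (mD a2 a3).
have [p2 [q2 [z2 [z2Z e31]]]] := dec2 (mD a3 a1).
have [p3 [q3 [z3 [z3Z e12]]]] := dec2 (mD a1 a2).
have J := jacobi Hbr a1 a2 a3.
rewrite e23 e31 e12 !(brDr Hbr) !(brZr Hbr) (brZr0 Hbr _ z1Z) (brZr0 Hbr _ z2Z) (brZr0 Hbr _ z3Z) in J.
rewrite !(brxx Hbr) (brC Hbr a1 a3) (brC Hbr a3 a2) in J.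
have J0 := congr1 (coord [tuple br a2 a3; br a3 a1; br a1 a2] o0) J.
have J1 := congr1 (coord [tuple br a2 a3; br a3 a1; br a1 a2] o1) J.
have J2 := congr1 (coord [tuple br a2 a3; br a3 a1; br a1 a2] o2) J.
rewrite linear0 !linearD !linearZ /= !linearN /= !linear0 !(c3x fr, c3y fr, c3z fr) /= in J0.
rewrite linear0 !linearD !linearZ /= !linearN /= !linear0 !(c3x fr, c3y fr, c3z fr) /= in J1.
rewrite linear0 !linearD !linearZ /= !linearN /= !linear0 !(c3x fr, c3y fr, c3z fr) /= in J2.
have hq2 : q2 = p3 by apply: (eq_by (k:=1) _ J0); ring.
have hq1 : q1 = 0 by apply: (eq_by (k := -1) _ J1); ring.
have hp1 : p1 = 0 by apply: (eq_by (k := 1) _ J2); ring.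
clear J J0 J1 J2.
have b23Z : br a2 a3 \in Z by rewrite e23 hp1 hq1 !scale0r !add0r.
have ad23 : br a1 (br a2 a3) = 0 by rewrite (brZr0 Hbr _ b23Z).
have ad31 : br a1 (br a3 a1) = p2 *: br a1 a2 + q2 *: - br a3 a1.
  by rewrite {1}e31 !(brDr Hbr) !(brZr Hbr) (brZr0 Hbr _ z2Z) (brC Hbr a1 a3) addr0.
have ad12 : br a1 (br a1 a2) = p3 *: br a1 a2 + q3 *: - br a3 a1.
  by rewrite {1}e12 !(brDr Hbr) !(brZr Hbr) (brZr0 Hbr _ z3Z) (brC Hbr a1 a3) addr0.
have brDD : forall u v, u \in D -> v \in D -> br u v \in Z.
  move=> u v; rewrite hD => Hu Hv.
  apply: (span_brZ Hbr (s := [:: a2; a3]) (t := [:: a2; a3])) Hu Hv.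
  move=> x y; rewrite !inE => /orP[]/eqP-> /orP[]/eqP->;
    rewrite ?(brxx Hbr) ?mem0v //.
  by rewrite (brC Hbr) memvN.
have zb : br (br a3 a1) (br a1 a2) = (p2 * q3 - q2 * p3) *: br a2 a3.
  have h := erefl (br (br a3 a1) (br a1 a2)).
  rewrite {2}e31 {2}e12 !(brDl Hbr) !(brDr Hbr) !(brZl Hbr) !(brZr Hbr) in h.
  rewrite (brZl0 Hbr _ z2Z) (brZr0 Hbr _ z3Z) !(brZl0 Hbr _ z2Z) !(brZr0 Hbr _ z3Z) !(brxx Hbr) (brC Hbr a3 a2) in h.
  apply: (coord_inj (X := [tuple br a2 a3; br a3 a1; br a1 a2])).
  - by rewrite -DB inD.
  - by rewrite rpredZ // memv_span // inE eqxx.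
  move=> j; rewrite h; crd fr.
  by case: j => [[|[|[|k]]] Hk] //=; ring.
have a2D : a2 \in D.
  by rewrite hD; apply/memv_addP; exists a2; [apply: memv_span; rewrite inE eqxx|exists 0; rewrite ?mem0v ?addr0].
have a3D : a3 \in D.
  by rewrite hD; apply/memv_addP; exists a3; [apply: memv_span; rewrite !inE eqxx orbT|exists 0; rewrite ?mem0v ?addr0].
rewrite DB in a2D a3D.
have ga2 := span3 (a2D : a2 \in <<[tuple br a2 a3; br a3 a1; br a1 a2]>>%VS).
have ga3 := span3 (a3D : a3 \in <<[tuple br a2 a3; br a3 a1; br a1 a2]>>%VS).
have ha2 := congr1 (br a1) ga2; have ha3 := congr1 (br a1) ga3.
rewrite !(brDr Hbr) !(brZr Hbr) ad23 ad31 ad12 in ha2 ha3.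
have E1 := congr1 (coord [tuple br a2 a3; br a3 a1; br a1 a2] o1) ha2.
have E2 := congr1 (coord [tuple br a2 a3; br a3 a1; br a1 a2] o2) ha2.
have E3 := congr1 (coord [tuple br a2 a3; br a3 a1; br a1 a2] o1) ha3.
have E4 := congr1 (coord [tuple br a2 a3; br a3 a1; br a1 a2] o2) ha3.
rewrite (brC Hbr a1 a3) in E3 E4.
move: E1 E2 E3 E4; crd fr.
set g1 := coord [tuple br a2 a3; br a3 a1; br a1 a2] o1 a2.
set g2 := coord [tuple br a2 a3; br a3 a1; br a1 a2] o2 a2.
set h1 := coord [tuple br a2 a3; br a3 a1; br a1 a2] o1 a3.
set h2 := coord [tuple br a2 a3; br a3 a1; br a1 a2] o2 a3.
move=> E1 E2 E3 E4.
have k1 : g1 * q2 + g2 * q3 = 0 by solve_by E1.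
have k2 : g1 * p2 + g2 * p3 = 1 by solve_by E2.
have k3 : h1 * q2 + h2 * q3 = 1 by solve_by E3.
have k4 : h1 * p2 + h2 * p3 = 0 by solve_by E4.
have detn : (p2 * q3 - q2 * p3) * (g1 * h2 - g2 * h1) = 1.
  have -> : (p2 * q3 - q2 * p3) * (g1 * h2 - g2 * h1) =
    (g1 * p2 + g2 * p3) * (h1 * q2 + h2 * q3) - (g1 * q2 + g2 * q3) * (h1 * p2 + h2 * p3) by ring.
  by rewrite k1 k2 k3 k4 mulr1 mul0r subr0.
have dn0 : p2 * q3 - q2 * p3 != 0.
  by apply/eqP => e; move: detn; rewrite e mul0r => /eqP; rewrite eq_sym oner_eq0.
rewrite -hq2 in ad12 dn0 zb.
have dd : q2 * q2 - p2 * q3 != 0.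
  by apply: contraNneq dn0 => e; apply/eqP; apply: (eq_by (k := -1) _ e); ring.
have [mu [c2 [c3 [d2 [d3 [mun0 ec1 ec2 [ed1 ed2] cdn0]]]]]] := eig sq two dd.
pose x2 := c2 *: br a1 a2 - c3 *: br a3 a1.
pose x3 := d2 *: br a1 a2 - d3 *: br a3 a1.
have x2B : x2 \in <<[tuple br a2 a3; br a3 a1; br a1 a2]>>%VS.
  by rewrite rpredB // rpredZ // memv_span // !inE eqxx ?orbT.
have x3B : x3 \in <<[tuple br a2 a3; br a3 a1; br a1 a2]>>%VS.
  by rewrite rpredB // rpredZ // memv_span // !inE eqxx ?orbT.
have ev2 : br a1 x2 = mu *: x2.
  apply: (coord_inj (X := [tuple br a2 a3; br a3 a1; br a1 a2])).
  - by rewrite -DB inD.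
  - by rewrite rpredZ.
  move=> j; rewrite /x2 (brBr Hbr) !(brZr Hbr) ad12 ad31; crd fr.
  case: j => [[|[|[|k]]] Hk] //=.
  - by ring.
  - by solve_by ec2.
  - by solve_by ec1.
have ev3 : br a1 x3 = - mu *: x3.
  apply: (coord_inj (X := [tuple br a2 a3; br a3 a1; br a1 a2])).
  - by rewrite -DB inD.
  - by rewrite rpredZ.
  move=> j; rewrite /x3 (brBr Hbr) !(brZr Hbr) ad12 ad31; crd fr.
  case: j => [[|[|[|k]]] Hk] //=.
  - by ring.
  - by solve_by ed2.
  - by solve_by ed1.
have x2D : x2 \in D by rewrite DB.
have x3D : x3 \in D by rewrite DB.
have zZ := brDD _ _ x2D x3D.
have zn0 : br x2 x3 != 0.
  apply/eqP => e.
  have := congr1 (coord [tuple br a2 a3; br a3 a1; br a1 a2] o0) e.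
  rewrite /x2 /x3 (brBl Hbr) !(brBr Hbr) !(brZl Hbr) !(brZr Hbr) !(brxx Hbr).
  rewrite (brC Hbr (br a1 a2) (br a3 a1)) zb; crd fr => h.
  have : (c2 * d3 - c3 * d2) * (p2 * q3 - q2 * q2) = 0 by solve_by h.
  by apply/eqP; rewrite mulf_neq0.
apply: (final Hbr (x1 := mu^-1 *: a1) ZD dD dQ _ _ zZ zn0).
- by rewrite (brZl Hbr) ev2 scalerA mulVf // scale1r.
- by rewrite (brZl Hbr) ev3 scalerA mulrN mulVf // scaleN1r.
Qed.
End Case1b.



Section Case2.
Variables (F : fieldType) (L : vectType F) (br : L -> L -> L).
Hypothesis Hbr : is_lie_bracket br.
Local Notation Z := (lie_center br).
Local Notation D := (lie_derived br).

Lemma case2 (a1 a2 a3 : L) :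
  (fullv = <<[:: a1; a2; a3]>> + Z)%VS -> (D = <<[:: a3]>> + Z)%VS ->
  \dim D = 3%N -> lie_nilpotent br.
Proof.
move=> hL hD dD.
have [fr DB] := freeB Hbr hL dD.
have inD : forall u v, br u v \in D by move=> u v; apply: memD.
have mD : forall u v, br u v \in (<<[:: a3]>> + Z)%VS by move=> u v; rewrite -hD inD.
have [m1 [z1 [z1Z e23]]] := dec1 (mD a2 a3).
have [m2 [z2 [z2Z e31]]] := dec1 (mD a3 a1).
have [m3 [z3 [z3Z e12]]] := dec1 (mD a1 a2).
have J := jacobi Hbr a1 a2 a3.
rewrite e23 e31 e12 !(brDr Hbr) !(brZr Hbr) (brZr0 Hbr _ z1Z) (brZr0 Hbr _ z2Z) (brZr0 Hbr _ z3Z) in J.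
rewrite !(brxx Hbr) (brC Hbr a1 a3) in J.
have J0 := congr1 (coord [tuple br a2 a3; br a3 a1; br a1 a2] o0) J.
have J1 := congr1 (coord [tuple br a2 a3; br a3 a1; br a1 a2] o1) J.
move: J0 J1; crd fr => J0 J1.
have hm2 : m2 = 0 by solve_by J0.
have hm1 : m1 = 0 by solve_by J1.
have b23Z : br a2 a3 \in Z by rewrite e23 hm1 scale0r add0r.
have b31Z : br a3 a1 \in Z by rewrite e31 hm2 scale0r add0r.
have C2 : (lie_lower_central br 2 <= Z)%VS.
  apply: brs_sub => u d _ dD'.
  apply: (span_brZ Hbr (s := [:: a1; a2; a3]) (t := [:: a3])).
  - move=> x y; rewrite !inE => /or3P[]/eqP-> /eqP->.
    + by rewrite (brC Hbr) memvN.
    + exact: b23Z.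
    + by rewrite (brxx Hbr) mem0v.
  - by rewrite -hL memvf.
  - by rewrite -hD.
exists 3%N; apply/eqP; rewrite -subv0.
apply: brs_sub => u c _ cC.
by rewrite (brZr0 Hbr _ (subvP C2 _ cC)) mem0v.
Qed.
End Case2.


Lemma main (F : fieldType) (sq : forall a : F, exists b, b * b = a) (two : (2%:R : F) != 0)
  (L : vectType F) (br : L -> L -> L) :
  is_lie_bracket br ->
  lie_pure br ->
  ~ lie_nilpotent br ->
  lie_solvable br ->
  \dim (lie_derived br) = 3%N ->
  (\dim (fullv : {vspace L}) - \dim (lie_center br))%N = 3%N ->
  exists x1 x2 x3 z : L,
    [/\ basis_of fullv [:: x1; x2; x3; z],
        br x1 x2 = x2, br x1 x3 = - x3, br x2 x3 = z &
        [/\ br x1 z = 0, br x2 z = 0 & br x3 z = 0]].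
Proof.
move=> Hbr ZD nnil sol dD dQ.
set Z := lie_center br in ZD dQ *; set D := lie_derived br in ZD dD *.
have kle : (\dim Z <= 3)%N by rewrite -dD dimvS.
have kn : (\dim Z <= \dim (fullv : {vspace L}))%N by rewrite dimvS // subvf.
have hn : \dim (fullv : {vspace L}) = (\dim Z + 3)%N.
  by rewrite -dQ subnKC.
have DnF : D != fullv.
  apply/eqP => DF; case: sol => m.
  have -> : lie_derived_series br m = fullv.
    by elim: m => [|m IH] //=; rewrite IH.
  move/eqP; rewrite -dimv_eq0 hn addnC //.
have kn0 : \dim Z != 0%N.
  apply: contra DnF => /eqP k0; by rewrite eqEdim subvf /= dD hn k0.
have dC : \dim D^C = \dim Z by rewrite dimv_compl hn dD addnK.
have dW : \dim (D :\: Z) = (3 - \dim Z)%N.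
  have := dimv_cap_compl D Z; rewrite (capv_idPr ZD) dD => <-.
  by rewrite addKn.
have hF : fullv = (D^C + (D :\: Z + Z))%VS.
  by rewrite addv_diff (addv_idPl ZD) addvC addv_complf.
have hDW : D = (D :\: Z + Z)%VS by rewrite addv_diff (addv_idPl ZD).
have : (\dim Z = 1 \/ \dim Z = 2 \/ \dim Z = 3)%N.
  by move: kle kn0; case: (\dim Z) => [|[|[|[|]]]]; auto.
case=> [k1|[k1|k1]]; rewrite k1 /= in dC dW.
-
  have [a1 eC] := dim1P dC.
  have [a2 [a3 eW]] := dim2P dW.
  apply: (case1 Hbr sq two (a1 := a1) (a2 := a2) (a3 := a3)) => //.
  + by rewrite hF eC eW addvA -span_cat.
  + by rewrite -/D -/Z {1}hDW eW.
-
  exfalso; apply: nnil.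
  have [a1 [a2 eC]] := dim2P dC.
  have [a3 eW] := dim1P dW.
  apply: (case2 Hbr (a1 := a1) (a2 := a2) (a3 := a3)) => //.
  + by rewrite hF eC eW addvA -span_cat.
  + by rewrite -/D -/Z {1}hDW eW.
-
  exfalso; apply: nnil.
  have ZeD : Z = D.
    by apply/eqP; rewrite eqEdim ZD dD k1.
  exists 2%N; apply/eqP; rewrite -subv0.
  apply: brs_sub => u c _ cD.
  have cZ : c \in Z by rewrite ZeD; exact: cD.
  by rewrite (brZr0 Hbr _ cZ) mem0v.
Qed.


Unset Implicit Arguments.

(* The complex numbers are R[i] for R : realType (a model of the reals). *)
Theorem theorem3p2 (R : realType) (L : vectType R[i]) (br : L -> L -> L) :
  is_lie_bracket br ->
  lie_pure br ->
  ~ lie_nilpotent br ->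
  lie_solvable br ->
  lie_breadth_eq br 2 ->
  \dim (lie_derived br) = 3%N ->
  (\dim (fullv : {vspace L}) - \dim (lie_center br))%N = 3%N ->
  exists x1 x2 x3 z : L,
    [/\ basis_of fullv [:: x1; x2; x3; z],
        br x1 x2 = x2, br x1 x3 = - x3, br x2 x3 = z &
        [/\ br x1 z = 0, br x2 z = 0 & br x3 z = 0]].
Proof.
move=> Hbr pure nnil sol _ dD dQ.
apply: main => //.
- by move=> a; exists (sqrtC a); rewrite -expr2 sqrtCK.
- by rewrite pnatr_eq0.
Qed.
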